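(* Let $\rho_{AB}$ and $\sigma_B$ be quantum states, $\varepsilon\in(0,1)$, and let $S_A$ be a convex set of quantum states on register $A$. There exists an operator $M^*$ satisfying $\mathrm{Tr}[M^*\rho_{AB}]\ge1-\varepsilon$ such that for all quantum states $\tau_A\in S_A$, $$\mathrm{Tr}[M^*(\tau_A\otimes\sigma_B)]\le 2^{-\tilde{\mathrm{I}}^{\varepsilon,S_A}_{\mathrm{H}}(A:B)_{\rho_{AB},\sigma_B}}.$$
   Context: Finite-dimensional Hilbert spaces; $\log$ base 2. $\mathrm{D}^{\varepsilon}_{\mathrm{H}}(\rho\|\sigma)=\max\{-\log\mathrm{Tr}[M\sigma]: 0\preceq M\preceq \mathbb{I},\ \mathrm{Tr}[M\rho]\ge 1-\varepsilon\}$. For a convex set $S_A$ of states on $A$, $\tilde{\mathrm{I}}^{\varepsilon,S_A}_{\mathrm{H}}(A:B)_{\rho_{AB},\sigma_B}=\min_{\tau_A\in S_A}\mathrm{D}^{\varepsilon}_{\mathrm{H}}(\rho_{AB}\|\tau_A\otimes\sigma_B)$. *)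

(* Defs.v *)
From HB Require Import structures.
From mathcomp Require Import all_boot all_order all_algebra.
From mathcomp Require Import complex mxtens.
From mathcomp Require Import boolp classical_sets reals ereal exp.
Set Implicit Arguments. Unset Strict Implicit. Unset Printing Implicit Defensive.
Import Order.TTheory GRing.Theory Num.Theory.
Local Open Scope ring_scope.
Local Open Scope classical_set_scope.

Section QDefs.
Variable R : realType.
Local Notation C := R[i].

Definition adjmx m n (A : 'M[C]_(m, n)) : 'M[C]_(n, m) :=
  (map_mx (fun z : C => (z^*)%C) A)^T.

Definition hermitian n (A : 'M[C]_n) : Prop := adjmx A = A.

Definition psd n (A : 'M[C]_n) : Prop :=
  hermitian A /\ forall v : 'cV[C]_n, 0 <= (adjmx v *m A *m v) 0 0.

Definition loewner n (A B : 'M[C]_n) : Prop := psd (B - A).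

Definition is_state n (rho : 'M[C]_n) : Prop := psd rho /\ \tr rho = 1.

(* real part of the trace (traces below are of products of PSD operators,
   hence real) *)
Definition trR n (A : 'M[C]_n) : R := complex.Re (\tr A).

Definition test_op n (M : 'M[C]_n) : Prop := loewner 0 M /\ loewner M 1%:M.

Definition neglog2 (x : R) : \bar R :=
  if x <= 0 then +oo%E else (- (ln x / ln 2))%:E.

Definition exp2E (x : \bar R) : \bar R :=
  match x with
  | EFin r => (2 `^ r)%:E
  | +oo%E => +oo%E
  | -oo%E => 0%E
  end.

Definition DH n (eps : R) (rho sigma : 'M[C]_n) : \bar R :=
  ereal_sup [set neglog2 (trR (M *m sigma)) |
             M in [set M : 'M[C]_n | test_op M /\ 1 - eps <= trR (M *m rho)]].

Definition ItildeH dA dB (eps : R) (SA : set 'M[C]_dA)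
    (rho : 'M[C]_(dA * dB)) (sigma : 'M[C]_dB) : \bar R :=
  ereal_inf [set DH eps rho (tau *t sigma) | tau in SA].

Definition convex_mxset n (S : set 'M[C]_n) : Prop :=
  forall x y, S x -> S y -> forall t : R, 0 <= t <= 1 ->
    S ((t%:C)%C *: x + ((1 - t)%:C)%C *: y).

End QDefs.

(* Main.v *)
Require Import Defs.
From HB Require Import structures.
From mathcomp Require Import all_boot all_order all_algebra.
From mathcomp Require Import complex mxtens.
From mathcomp Require Import boolp classical_sets reals ereal exp.
From mathcomp Require Import topology normedtype.
From mathcomp Require Import ring lra.
Import Order.TTheory GRing.Theory Num.Theory.
Import numFieldNormedType.Exports.
Local Open Scope ring_scope.
Local Open Scope classical_set_scope.
Section Minimax.
Variables (R : realType) (X : normedModType R).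

Lemma seq_min_pos (T : eqType) (s : seq T) (F : T -> R) (t : R) :
  (forall p, p \in s -> t < F p) ->
  exists m, t < m /\ forall p, p \in s -> m <= F p.
Proof.
elim: s => [|p s IH] H.
  by exists (t + 1); split => //; lra.
have [m [tm Hm]] := IH (fun q qs => H q (mem_behead (s := p :: s) qs)).
have Hp := H p (mem_head _ _).
exists (Num.min (F p) m); split; first by rewrite lt_min Hp tm.
move=> q; rewrite in_cons => /orP[/eqP->|qs]; first by rewrite ge_min lexx.
by rewrite ge_min (Hm q qs) orbT.
Qed.

Lemma closed_fle (h : X -> R) (c : R) : continuous h -> closed [set x | h x <= c].
Proof.
move=> hc; apply: (@preimage_closed _ _ h [set r | r <= c]); last exact: closed_le.
by move=> x _; apply: hc.
Qed.

Lemma exactify (K : set X) (h : X -> R) (c : R) : compact K -> continuous h ->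
  (forall e, 0 < e -> exists2 x, K x & h x <= c + e) -> exists2 x, K x & h x <= c.
Proof.
move=> Kco hc H.
move: (Kco); rewrite compact_In0 => /(_ R [set e | 0 < e]
  (fun e => K `&` [set x | h x <= c + e])).
case.
- exists (fun e => [set x | h x <= c + e]) => // e _; exact: closed_fle.
- move=> D' sD'.
  have [m [m0 Hm]] := @seq_min_pos R (finmap.enum_fset D') id 0 
    (fun p pD => ltac:(by have := sD' p pD; rewrite inE)).
  have [x Kx hx] := H m m0.
  exists x => e /= eD; split => //.
  by apply: (le_trans hx); rewrite lerD2l; apply: Hm.
move=> x Hx.
have [Kx _] := Hx 1 ltr01.
exists x => //.
apply/ler_addgt0Pr => e e0.
by have [_ ] := Hx e e0.
Qed.
Arguments exactify [K h c].

Lemma bounded_above (K : set X) (h : X -> R) : compact K -> continuous h ->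
  exists B, forall x, K x -> h x <= B.
Proof.
move=> Kco hc.
have := compact_bounded (continuous_compact (continuous_subspaceT hc) Kco).
case=> M [_ HM].
exists (`|M| + 1) => x Kx.
have : (h @` K) (h x) by exists x.
move/(HM (`|M| + 1)) => /=.
have : M < `|M| + 1 by have := ler_norm M; lra.
move=> H /(_ H) hx.
by have := ler_norm (h x); lra.
Qed.

Lemma seg_lemma (a a' b b' c : R) : a <= c -> c < a' -> c < b -> b' <= c ->
 (forall s, 0 <= s <= 1 -> (1-s)*a + s*a' <= c \/ (1-s)*b + s*b' <= c) ->
 (forall s, 0 <= s <= 1 -> (1-s)*a + s*a' <= c -> (1-s)*b + s*b' <= c -> False) ->
 False.
Proof.
move=> ac ca cb bc Hor Hand.
set d := a' - a; set e := b - b'.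
have d0 : 0 < d by rewrite /d; lra.
have e0 : 0 < e by rewrite /e; lra.
set s0 := (c - a) / d; set sb := (b - c) / e.
have s0d : s0 * d = c - a by rewrite /s0 mulfVK // gt_eqF.
have sbe : sb * e = b - c by rewrite /sb mulfVK // gt_eqF.
have s00 : 0 <= s0 by rewrite /s0 divr_ge0 //; lra.
have s01 : s0 < 1 by rewrite /s0 ltr_pdivrMr // /d; lra.
have sb0 : 0 < sb by rewrite /sb divr_gt0 //; lra.
have sb1 : sb <= 1 by rewrite /sb ler_pdivrMr // /e; lra.
have s0sb : s0 < sb.
  rewrite ltNge; apply/negP => H.
  apply: (Hand s0); first by apply/andP; lra.
  - have -> : (1 - s0) * a + s0 * a' = a + s0 * d by rewrite /d; ring.
    lra.
  - have -> : (1 - s0) * b + s0 * b' = b - s0 * e by rewrite /e; ring.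
    have := ler_wpM2r (ltW e0) H; lra.
set s := (s0 + sb) / 2.
have ss0 : s0 < s by rewrite /s; lra.
have ssb : s < sb by rewrite /s; lra.
have [H|H] := Hor s ltac:(apply/andP; rewrite /s; lra).
- move: H.
  have -> : (1 - s) * a + s * a' = a + s * d by rewrite /d; ring.
  have := ss0; rewrite -(ltr_pM2r d0) => ?; lra.
- move: H.
  have -> : (1 - s) * b + s * b' = b - s * e by rewrite /e; ring.
  have := ssb; rewrite -(ltr_pM2r e0) => ?; lra.
Qed.

Arguments bounded_above [K h].

Lemma cont_comb (f1 f2 : X -> R) (a b : R) : continuous f1 -> continuous f2 ->
  continuous (fun x => a * f1 x + b * f2 x).
Proof.
move=> c1 c2 x.
apply: cvgD; apply: cvgM; [exact: cvg_cst|exact: c1|exact: cvg_cst|exact: c2].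
Qed.
Arguments cont_comb [f1 f2].
Lemma cont_comb2 (f1 f2 : X -> R) (a : R) : continuous f1 -> continuous f2 ->
  continuous (fun x => f1 x * a + f2 x).
Proof.
move=> c1 c2 x; apply: cvgD; [apply: cvgM; [exact: c1|exact: cvg_cst]|exact: c2].
Qed.
Arguments cont_comb2 [f1 f2].

Definition convexK (K : set X) := forall x z (a : R), K x -> K z -> 0 <= a <= 1 ->
  K (a *: x + (1 - a) *: z).
Definition affineK (K : set X) (f : X -> R) := forall x z (a : R), K x -> K z ->
  0 <= a <= 1 -> f (a *: x + (1 - a) *: z) = a * f x + (1 - a) * f z.

Lemma two_fun (K : set X) (f1 f2 : X -> R) (c : R) : compact K -> convexK K ->
  continuous f1 -> continuous f2 -> affineK K f1 -> affineK K f2 ->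
  (forall l, 0 <= l <= 1 -> exists2 x, K x & l * f1 x + (1 - l) * f2 x <= c) ->
  exists2 x, K x & f1 x <= c /\ f2 x <= c.
Proof.
move=> Kco Kcv c1 c2 a1 a2 H.
case: (pselect (exists2 x, K x & f1 x <= c /\ f2 x <= c)) => // Hn; exfalso.
have H0 : forall x, K x -> f1 x <= c -> f2 x <= c -> False.
  by move=> x Kx h1 h2; apply: Hn; exists x.
pose h l x := l * f1 x + (1 - l) * f2 x.
have hc : forall l, continuous (h l) by move=> l; exact: cont_comb.
have F1 : forall l x, 0 <= l <= 1 -> h l x <= c -> f1 x <= c \/ f2 x <= c.
  move=> l x /andP[l0 l1] hx.
  case: (leP (f1 x) c) => [|h1]; first by left.
  case: (leP (f2 x) c) => [|h2]; first by right.
  exfalso; move: hx; rewrite /h.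
  set m := Num.min (f1 x - c) (f2 x - c).
  have m0 : 0 < m by rewrite lt_min; apply/andP; lra.
  have m1 : m <= f1 x - c by rewrite ge_min lexx.
  have m2 : m <= f2 x - c by rewrite ge_min lexx orbT.
  have := mulr_ge0 l0 (ltac:(lra) : 0 <= f1 x - c - m).
  have := mulr_ge0 (ltac:(lra) : 0 <= 1 - l) (ltac:(lra) : 0 <= f2 x - c - m).
  nra.
have F2 : forall l x z, 0 <= l <= 1 -> K x -> K z -> h l x <= c -> h l z <= c ->
    f1 x <= c -> f2 z <= c -> False.
  move=> l x z l01 Kx Kz hx hz f1x f2z.
  have f1z : c < f1 z by rewrite ltNge; apply/negP => f1z; exact: (H0 z).
  have f2x : c < f2 x by rewrite ltNge; apply/negP => f2x; exact: (H0 x).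
  apply: (@seg_lemma (f1 x) (f1 z) (f2 x) (f2 z) c) => // s /andP[s0 s1].
  - have Kw : K ((1 - s) *: x + (1 - (1 - s)) *: z) by apply: Kcv => //; apply/andP; lra.
    have e1 := a1 x z (1 - s) Kx Kz ltac:(apply/andP; lra).
    have e2 := a2 x z (1 - s) Kx Kz ltac:(apply/andP; lra).
    have : h l ((1 - s) *: x + (1 - (1 - s)) *: z) <= c.
      have := mulr_ge0 (ltac:(lra) : 0 <= 1 - s) (ltac:(lra) : 0 <= c - h l x).
      have := mulr_ge0 s0 (ltac:(lra) : 0 <= c - h l z).
      rewrite /h e1 e2; nra.
    move/(F1 l _ l01); rewrite e1 e2.
    by have -> : 1 - (1 - s) = s by ring.
  - move=> hA hB.
    have Kw : K ((1 - s) *: x + (1 - (1 - s)) *: z) by apply: Kcv => //; apply/andP; lra.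
    have e1 := a1 x z (1 - s) Kx Kz ltac:(apply/andP; lra).
    have e2 := a2 x z (1 - s) Kx Kz ltac:(apply/andP; lra).
    have ss : 1 - (1 - s) = s by ring.
    apply: (H0 _ Kw); rewrite ?e1 ?e2 ss //.
pose P l := exists2 x, K x & h l x <= c /\ f1 x <= c.
pose Q l := exists2 x, K x & h l x <= c /\ f2 x <= c.
have PQ : forall l, 0 <= l <= 1 -> P l \/ Q l.
  move=> l l01; have [x Kx hx] := H l l01.
  by case: (F1 l x l01 hx) => ?; [left|right]; exists x.
have nPQ : forall l, 0 <= l <= 1 -> P l -> Q l -> False.
  by move=> l l01 [x Kx [hx f1x]] [z Kz [hz f2z]]; exact: (F2 l x z).
have P1 : P 1.
  have [x Kx hx] := H 1 ltac:(apply/andP; lra).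
  exists x => //; rewrite /h; split; lra.
have Q0 : Q 0.
  have [x Kx hx] := H 0 ltac:(apply/andP; lra).
  exists x => //; rewrite /h; split; lra.
have [B1 HB1] := bounded_above Kco (cont_comb 1 (-1) c1 c2).
have [B2 HB2] := bounded_above Kco (cont_comb (-1) 1 c1 c2).
set B := 1 + `|B1| + `|B2|.
have B0 : 0 < B by rewrite /B; have := normr_ge0 B1; have := normr_ge0 B2; lra.
have HB12 : forall x, K x -> f1 x - f2 x <= B.
  move=> x /HB1; rewrite /B; have := ler_norm B1; have := normr_ge0 B2; lra.
have HB21 : forall x, K x -> f2 x - f1 x <= B.
  move=> x /HB2; rewrite /B; have := ler_norm B2; have := normr_ge0 B1; lra.
pose S := [set l | 0 <= l <= 1 /\ Q l].
have hS : has_sup S.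
  split; first by exists 0; split => //; apply/andP; lra.
  by exists 1 => l [/andP[_ ?] _].
set s := sup S.
have s0 : 0 <= s by apply: sup_upper_bound => //; split => //; apply/andP; lra.
have s1 : s <= 1.
  by apply: ge_sup; [exists 0; split => //; apply/andP; lra|move=> l [/andP[_ ?] _]].
have s01 : 0 <= s <= 1 by apply/andP.
have exact2 : forall (f : X -> R), continuous f -> (~ exists2 x, K x & h s x <= c /\ f x <= c) ->
    exists2 e, 0 < e & forall x, K x -> f x <= c -> c + e < h s x.
  move=> f cf Hnf.
  case: (pselect (exists2 e, 0 < e & forall x, K x -> f x <= c -> c + e < h s x)) => // Hne.
  exfalso; apply: Hnf.
  have Kco' : compact (K `&` [set x | f x <= c]).
    by apply: compact_closedI => //; exact: closed_fle.
  have Hex : forall e, 0 < e -> exists2 x, (K `&` [set x | f x <= c]) x & h s x <= c + e.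
    move=> e e0.
    case: (pselect (exists2 x, (K `&` [set x | f x <= c]) x & h s x <= c + e)) => // Hx.
    exfalso; apply: Hne; exists e => // x Kx fx.
    rewrite ltNge; apply/negP => hle; apply: Hx; exists x => //.
  have [x [Kx fx] hx] := exactify Kco' (hc s) Hex.
  by exists x.
case: (PQ s s01) => [Ps|Qs].
- have nQs : ~ Q s by move=> Qs; exact: (nPQ s s01).
  have [e e0 He] := exact2 f2 c2 nQs.
  have eB0 : 0 < e / B by rewrite divr_gt0.
  have [mu [/andP[mu0 mu1] Qmu] smu] := sup_adherent eB0 hS.
  rewrite -/s in smu.
  have mus : mu <= s by apply: sup_upper_bound => //; split => //; apply/andP.
  case: Qmu => x Kx [hx f2x].
  have := He x Kx f2x.
  have h1 : (s - mu) * B < e by rewrite -ltr_pdivlMr //; lra.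
  have h2 : (s - mu) * (f1 x - f2 x) <= (s - mu) * B.
    by apply: ler_wpM2l; [lra|exact: HB12].
  move: hx; rewrite /h; lra.
- have nPs : ~ P s by move=> Ps; exact: (nPQ s s01).
  have sl1 : s < 1.
    rewrite lt_neqAle s1 andbT; apply/negP => /eqP s1e.
    by apply: nPs; rewrite s1e.
  have [e e0 He] := exact2 f1 c1 nPs.
  have eB0 : 0 < e / B by rewrite divr_gt0.
  set d := Num.min (1 - s) (e / B) / 2.
  have d0 : 0 < d by rewrite /d divr_gt0 // lt_min; apply/andP; lra.
  have d1 : d <= (1 - s) / 2 by rewrite /d ler_pM2r // ge_min lexx.
  have d2 : d <= (e / B) / 2 by rewrite /d ler_pM2r // ge_min lexx orbT.
  have mu01 : 0 <= s + d <= 1 by apply/andP; lra.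
  have nQmu : ~ Q (s + d).
    move=> Qmu; have : s + d <= s by apply: sup_upper_bound => //; split.
    lra.
  have [Pmu|//] := PQ (s + d) mu01.
  case: Pmu => x Kx [hx f1x].
  have := He x Kx f1x.
  have h1 : d * B < e by rewrite -ltr_pdivlMr //; lra.
  have h2 : d * (f2 x - f1 x) <= d * B.
    by apply: ler_wpM2l; [lra|exact: HB21].
  move: hx; rewrite /h; lra.
Qed.

Section MinimaxFin.
Variables (I : choiceType) (Y : set I) (mix : R -> I -> I -> I) (g : I -> X -> R).
Hypothesis hmixY : forall y1 y2 a, Y y1 -> Y y2 -> 0 <= a <= 1 -> Y (mix a y1 y2).
Hypothesis hmixg : forall y1 y2 a x, g (mix a y1 y2) x = a * g y1 x + (1 - a) * g y2 x.
Hypothesis hcont : forall y, continuous (g y).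
Hypothesis haff : forall y x z a, g y (a *: x + (1 - a) *: z) = a * g y x + (1 - a) * g y z.

Lemma fin_minimax (c : R) (ys : seq I) : forall K, compact K -> convexK K ->
  (exists x, K x) -> (forall y, Y y -> exists2 x, K x & g y x <= c) ->
  (forall y, y \in ys -> Y y) ->
  exists2 x, K x & forall y, y \in ys -> g y x <= c.
Proof.
elim: ys => [|y0 ys IH] K Kco Kcv [x0 Kx0] HK Hys.
  by exists x0.
have Y0 : Y y0 by apply: Hys; rewrite mem_head.
pose K' := K `&` [set x | g y0 x <= c].
have K'co : compact K' by apply: compact_closedI => //; exact: closed_fle.
have K'cv : convexK K'.
  move=> x z a [Kx /= gx] [Kz /= gz] a01; split; first exact: Kcv.
  rewrite /= haff; move: a01 => /andP[a0 a1].
  have := mulr_ge0 a0 (ltac:(lra) : 0 <= c - g y0 x).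
  have := mulr_ge0 (ltac:(lra) : 0 <= 1 - a) (ltac:(lra) : 0 <= c - g y0 z).
  nra.
have HK' : forall y, Y y -> exists2 x, K' x & g y x <= c.
  move=> y Yy.
  have [|x Kx [h1 h2]] := @two_fun K (g y) (g y0) c Kco Kcv (hcont y) (hcont y0)
      (fun x z a _ _ _ => haff y x z a) (fun x z a _ _ _ => haff y0 x z a).
    move=> l l01; have [x Kx hx] := HK _ (hmixY _ _ _ Yy Y0 l01).
    by exists x => //; rewrite -hmixg.
  by exists x.
have [x Kx hx] := HK y0 Y0.
have [z [Kz gz] Hz] := IH K' K'co K'cv (ex_intro _ x (conj Kx hx)) HK'
  (fun y yys => Hys y (mem_behead (s := y0 :: ys) yys)).
exists z => // y; rewrite in_cons => /orP[/eqP->//|]; exact: Hz.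
Qed.

Lemma minimax (t : R) (K : set X) : compact K -> convexK K -> (exists x, K x) ->
  (forall y, Y y -> forall c, t < c -> exists2 x, K x & g y x <= c) ->
  exists2 x, K x & forall y, Y y -> g y x <= t.
Proof.
move=> Kco Kcv [x0 Kx0] H.
case: (pselect (exists y, Y y)) => [[y1 Yy1]|nY]; last first.
  by exists x0 => // y Yy; exfalso; apply: nY; exists y.
move: (Kco); rewrite compact_In0 => /(_ (I * R)%type
  [set p | Y p.1 /\ t < p.2] (fun p => K `&` [set x | g p.1 x <= p.2])).
case.
- exists (fun p => [set x | g p.1 x <= p.2]) => // p _; exact: closed_fle.
- move=> D' sD'.
  have sD : forall p, p \in finmap.enum_fset D' -> Y p.1 /\ t < p.2.
    by move=> p pD; have := sD' p pD; rewrite inE.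
  have [m [tm Hm]] := @seq_min_pos _ (finmap.enum_fset D') snd t
    (fun p pD => (sD p pD).2).
  have [|x Kx Hx] := @fin_minimax m (map fst (finmap.enum_fset D')) K Kco Kcv
    (ex_intro _ x0 Kx0) (fun y Yy => H y Yy m tm) _.
    by move=> y /mapP[p pD ->]; exact: (sD p pD).1.
  exists x => p /= pD; split => //.
  apply: (le_trans (Hx _ _)); last exact: Hm.
  by apply/mapP; exists p.
move=> x Hx.
have [Kx _] := Hx (y1, t + 1) (conj Yy1 (ltac:(lra) : t < t + 1)).
exists x => // y Yy.
apply/ler_addgt0Pr => e e0.
by have [_] := Hx (y, t + e) (conj Yy (ltac:(lra) : t < t + e)).
Qed.

End MinimaxFin.
End Minimax.
Section Concrete.
Variables (R : realType) (n : nat).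
Local Notation C := (R[i]).
Local Open Scope complex_scope.
Local Notation X := ('rV[R]_(n * n + n * n)).

Definition phi (x : X) : 'M[C]_n :=
  \matrix_(i, j) ((x 0 (lshift (n * n) (mxvec_index i j))) +i*
                  (x 0 (rshift (n * n) (mxvec_index i j))))%C.

Definition psi (M : 'M[C]_n) : X :=
  row_mx (mxvec (map_mx (@complex.Re R) M)) (mxvec (map_mx (@complex.Im R) M)).

Lemma phiK M : phi (psi M) = M.
Proof.
apply/matrixP => i j; rewrite mxE row_mxEl row_mxEr !mxvecE !mxE.
by case: (M i j).
Qed.

Lemma ReL (a : R) (z w : C) : complex.Re (a%:C * z + w) = a * complex.Re z + complex.Re w.
Proof. by case: z => x y; case: w => u v /=; rewrite mul0r subr0. Qed.

Lemma ImL (a : R) (z w : C) : complex.Im (a%:C * z + w) = a * complex.Im z + complex.Im w.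
Proof. by case: z => x y; case: w => u v /=; rewrite mul0r addr0. Qed.

Lemma phi_lin (a : R) (x y : X) : phi (a *: x + y) = a%:C *: phi x + phi y.
Proof.
apply/matrixP => i j; rewrite !mxE.
by apply/eqP; rewrite eq_complex /= !mul0r subr0 addr0 !eqxx.
Qed.

Definition rlinX m (L : 'rV[R]_m -> R) := forall a x y, L (a *: x + y) = a * L x + L y.
Arguments rlinX [m].

Lemma rlinX0 m (L : 'rV[R]_m -> R) : rlinX L -> L 0 = 0.
Proof.
move=> HL; have := HL 1 0 0; rewrite scale1r addr0 mul1r => H.
have : L 0 + L 0 - L 0 = L 0 - L 0 by rewrite -H.
by rewrite addrK subrr.
Qed.

Lemma rlinX_aff m (L : 'rV[R]_m -> R) : rlinX L -> forall x z (a : R),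
  L (a *: x + (1 - a) *: z) = a * L x + (1 - a) * L z.
Proof.
move=> HL x z a; rewrite HL; congr (_ + _).
by rewrite -[(1 - a) *: z]addr0 HL rlinX0 // addr0.
Qed.

Lemma sum_coord_cont m (c : 'I_m -> R) (r : seq 'I_m) :
  continuous (fun x : 'rV[R]_m => \sum_(j <- r) x 0 j * c j).
Proof.
elim: r => [|j r IH].
  have -> : (fun x : 'rV[R]_m => \sum_(j <- [::]) x 0 j * c j) = (fun=> 0).
    by apply/funext => x; rewrite big_nil.
  exact: cst_continuous.
have -> : (fun x : 'rV[R]_m => \sum_(i <- j :: r) x 0 i * c i) =
   (fun x => x 0 j * c j + \sum_(i <- r) x 0 i * c i).
  by apply/funext => x; rewrite big_cons.
exact: (@cont_comb2 R 'rV[R]_m _ _ (c j) (@coord_continuous R 1 m 0 j) IH).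
Qed.

Lemma rlinX_cont m (L : 'rV[R]_m -> R) : rlinX L -> continuous L.
Proof.
move=> HL.
have E : L = (fun x : 'rV[R]_m => \sum_(j <- index_enum 'I_m) x 0 j * L (delta_mx 0 j)).
  apply/funext => x.
  rewrite {1}[x]row_sum_delta.
  elim/big_rec2: _ => [|j s v _ <-]; first exact: rlinX0.
  by rewrite HL.
rewrite E; exact: sum_coord_cont.
Qed.


Definition clin (F : 'M[C]_n -> C) :=
  forall (a : R) M M', F (a%:C *: M + M') = a%:C * F M + F M'.

Lemma clin_cont_Re {F} : clin F -> continuous (fun x => complex.Re (F (phi x))).
Proof. by move=> HF; apply: rlinX_cont => a x y; rewrite phi_lin HF ReL. Qed.

Lemma clin_cont_Im {F} : clin F -> continuous (fun x => complex.Im (F (phi x))).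
Proof. by move=> HF; apply: rlinX_cont => a x y; rewrite phi_lin HF ImL. Qed.

Lemma clin_aff_Re {F} A0 s : clin F ->
  continuous (fun x => complex.Re (F (s%:C *: phi x + A0))).
Proof.
move=> HF.
have -> : (fun x => complex.Re (F (s%:C *: phi x + A0))) =
  (fun x => complex.Re (F (phi x)) * s + (fun=> complex.Re (F A0)) x).
  by apply/funext => x; rewrite HF ReL mulrC.
have H2 := (@cont_comb2 R X _ _ s (clin_cont_Re HF) (@cst_continuous _ _ (complex.Re (F A0)))).
exact H2.
Qed.

Lemma clin_aff_Im {F} A0 s : clin F ->
  continuous (fun x => complex.Im (F (s%:C *: phi x + A0))).
Proof.
move=> HF.
have -> : (fun x => complex.Im (F (s%:C *: phi x + A0))) =
  (fun x => complex.Im (F (phi x)) * s + (fun=> complex.Im (F A0)) x).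
  by apply/funext => x; rewrite HF ImL mulrC.
have H2 := (@cont_comb2 R X _ _ s (clin_cont_Im HF) (@cst_continuous _ _ (complex.Im (F A0)))).
exact H2.
Qed.

Lemma closed_feq {h : X -> R} {c} : continuous h -> closed [set x | h x = c].
Proof.
move=> hc; apply: (@preimage_closed _ _ h [set r | r = c]); last exact: closed_eq.
by move=> x _; apply: hc.
Qed.

Lemma closed_fge {h : X -> R} {c} : continuous h -> closed [set x | c <= h x].
Proof.
move=> hc; apply: (@preimage_closed _ _ h [set r | c <= r]); last exact: closed_ge.
by move=> x _; apply: hc.
Qed.

Lemma closed_iff (P Q : X -> Prop) : (forall x, P x <-> Q x) ->
  closed [set x | P x] -> closed [set x | Q x].
Proof.
move=> H; have -> : [set x | Q x] = [set x | P x]; last by [].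
by apply/seteqP; split => x /= /H.
Qed.

Lemma closed_forall (I : Type) (P : I -> X -> Prop) :
  (forall i, closed [set x | P i x]) -> closed [set x | forall i, P i x].
Proof.
move=> H.
have -> : [set x | forall i, P i x] = \bigcap_(i in setT) [set x | P i x].
  apply/seteqP; split => x /= Hx.
    by move=> i _; exact: Hx.
  move=> i; apply: Hx; done.
exact: closed_bigI.
Qed.

Lemma closed_and (P Q : X -> Prop) :
  closed [set x | P x] -> closed [set x | Q x] -> closed [set x | P x /\ Q x].
Proof. exact: closedI. Qed.

Lemma closed_ge0_aff {F A0 s} : clin F -> closed [set x | 0 <= F (s%:C *: phi x + A0)].
Proof.
move=> HF.
apply: (@closed_iff (fun x => complex.Im (F (s%:C *: phi x + A0)) = 0 /\
                               0 <= complex.Re (F (s%:C *: phi x + A0)))).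
  move=> x; rewrite lecE /=; split.
    by move=> [-> ->]; rewrite eqxx.
  by move=> /andP[/eqP -> ->].
apply: closed_and; [exact: closed_feq (clin_aff_Im _ _ HF)|exact: closed_fge (clin_aff_Re _ _ HF)].
Qed.

Lemma closed_eq0_aff {F A0 s} : clin F -> closed [set x | F (s%:C *: phi x + A0) = 0].
Proof.
move=> HF.
apply: (@closed_iff (fun x => complex.Re (F (s%:C *: phi x + A0)) = 0 /\
                               complex.Im (F (s%:C *: phi x + A0)) = 0)).
  move=> x; split.
    by case: (F _) => a b /= [-> ->].
  by move=> ->.
apply: closed_and; [exact: closed_feq (clin_aff_Re _ _ HF)|exact: closed_feq (clin_aff_Im _ _ HF)].
Qed.

Definition Fq (v : 'cV[C]_n) (M : 'M[C]_n) : C := (adjmx v *m M *m v) 0 0.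

Lemma Fq_clin v : clin (Fq v).
Proof.
move=> a M M'; rewrite /Fq mulmxDr mulmxDl -scalemxAr -scalemxAl.
by rewrite !mxE.
Qed.

Lemma conjD (z w : C) : conjc (z + w) = conjc z + conjc w.
Proof. by case: z => x y; case: w => u v /=; rewrite opprD. Qed.

Lemma conjRM (a : R) (z : C) : conjc (a%:C * z) = a%:C * conjc z.
Proof.
case: z => x y; apply/eqP; rewrite eq_complex /= !mul0r !subr0 !addr0.
by rewrite mulrN !eqxx.
Qed.

Definition Fent (i j : 'I_n) (M : 'M[C]_n) : C := M i j - conjc (M j i).

Lemma Fent_clin i j : clin (Fent i j).
Proof.
move=> a M M'; rewrite /Fent !mxE conjD conjRM.
by rewrite mulrBr opprD addrACA.
Qed.

Definition Ftr (Y : 'M[C]_n) (M : 'M[C]_n) : C := \tr (M *m Y).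

Lemma Ftr_clin Y : clin (Ftr Y).
Proof.
by move=> a M M'; rewrite /Ftr mulmxDl -scalemxAl mxtraceD mxtraceZ.
Qed.

Lemma herm_iff (A : 'M[C]_n) : Defs.hermitian A <-> forall i j, Fent i j A = 0.
Proof.
rewrite /Defs.hermitian /Fent; split.
  by move=> H i j; rewrite -{1}H /adjmx !mxE subrr.
move=> H; apply/matrixP => i j; rewrite /adjmx !mxE.
by have /eqP := H i j; rewrite subr_eq0 => /eqP ->.
Qed.

Lemma closed_psd_aff A0 s : closed [set x | psd (s%:C *: phi x + A0)].
Proof.
apply: closed_and.
  apply: (@closed_iff (fun x => forall i j, Fent i j (s%:C *: phi x + A0) = 0)).
    by move=> x; rewrite herm_iff.
  apply: closed_forall => i; apply: closed_forall => j.
  exact: closed_eq0_aff (Fent_clin i j).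
apply: closed_forall => v; exact: closed_ge0_aff (Fq_clin v).
Qed.


Lemma one_C : (1%:C : C) = 1.
Proof. by []. Qed.

Lemma mone_C : ((-1)%:C : C) = -1.
Proof. by apply/eqP; rewrite eq_complex /= oppr0 !eqxx. Qed.

Lemma oneB_C (a : R) : ((1 - a)%:C : C) = 1 - a%:C.
Proof. by apply/eqP; rewrite eq_complex /= oppr0 addr0 !eqxx. Qed.

Definition Kset (eps : R) (rho : 'M[C]_n) : set X :=
  [set x | test_op (phi x) /\ 1 - eps <= trR (phi x *m rho)].

Lemma Kset_closed eps rho : closed (Kset eps rho).
Proof.
apply: closed_and; last exact: (closed_fge (clin_cont_Re (Ftr_clin rho))).
apply: closed_and.
  apply: (@closed_iff (fun x => psd (1%:C *: phi x + 0))); last exact: closed_psd_aff.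
  by move=> x; rewrite /loewner one_C scale1r addr0 subr0.
apply: (@closed_iff (fun x => psd ((-1)%:C *: phi x + 1%:M))); last exact: closed_psd_aff.
by move=> x; rewrite /loewner mone_C scaleN1r addrC.
Qed.

Lemma conjM (z w : C) : conjc (z * w) = conjc z * conjc w.
Proof.
case: z => x y; case: w => u v; apply/eqP; rewrite eq_complex /=.
by apply/andP; split; apply/eqP; ring.
Qed.

Lemma adj_lin (u w : 'cV[C]_n) (c : C) : adjmx (u + c *: w) = adjmx u + conjc c *: adjmx w.
Proof. by apply/matrixP => i j; rewrite !mxE conjD conjM. Qed.

Lemma Fq_expand (P : 'M[C]_n) (u w : 'cV[C]_n) (c : C) :
  Fq (u + c *: w) P = Fq u P + c * (adjmx u *m P *m w) 0 0 +
    conjc c * (adjmx w *m P *m u) 0 0 + conjc c * c * Fq w P.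
Proof.
rewrite /Fq adj_lin !mulmxDl !mulmxDr -?scalemxAl -?scalemxAr -?scalemxAl -?scalemxAr !mxE.
ring.
Qed.

Lemma Fq_delta (P : 'M[C]_n) a b :
  (adjmx (delta_mx a 0 : 'cV[C]_n) *m P *m (delta_mx b 0 : 'cV[C]_n)) 0 0 = P a b.
Proof.
have -> : adjmx (delta_mx a 0 : 'cV[C]_n) = delta_mx 0 a.
  apply/matrixP => i j; rewrite !mxE.
  by rewrite andbC; case: (_ && _); rewrite /= ?oppr0.
by rewrite -rowE -colE !mxE.
Qed.

Lemma ge0_Re {z : C} : 0 <= z -> 0 <= complex.Re z.
Proof. by rewrite lecE => /andP[]. Qed.

Lemma test_bound {M : 'M[C]_n} : test_op M -> forall i j,
  `|complex.Re (M i j)| <= 1 /\ `|complex.Im (M i j)| <= 1.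
Proof.
move=> [[hM qM] [_ qQ]] i j.
rewrite subr0 in hM qM.
have hM' := iffLR (herm_iff _) hM.
have Mji : M j i = conjc (M i j).
  by have /eqP := hM' j i; rewrite /Fent subr_eq0 => /eqP.
have qv : forall c : C, 0 <= complex.Re (Fq (delta_mx i 0 + c *: delta_mx j 0) M).
  by move=> c; apply: ge0_Re; apply: qM.
have dii : 0 <= complex.Re (M i i) by have := ge0_Re (qM (delta_mx i 0)); rewrite Fq_delta.
have djj : 0 <= complex.Re (M j j) by have := ge0_Re (qM (delta_mx j 0)); rewrite Fq_delta.
have dii1 : complex.Re (M i i) <= 1.
  have := ge0_Re (qQ (delta_mx i 0)); rewrite Fq_delta !mxE eqxx /=.
  by case: (M i i) => ? ? /=; lra.
have djj1 : complex.Re (M j j) <= 1.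
  have := ge0_Re (qQ (delta_mx j 0)); rewrite Fq_delta !mxE eqxx /=.
  by case: (M j j) => ? ? /=; lra.
have q1 := qv (1 +i* 0)%C.
have q2 := qv ((-1) +i* 0)%C.
have q3 := qv (0 +i* 1)%C.
have q4 := qv (0 +i* (-1))%C.
rewrite !Fq_expand !Fq_delta /Fq !Fq_delta Mji in q1 q2 q3 q4.
move: dii djj dii1 djj1 q1 q2 q3 q4.
case: (M i i) => d d'; case: (M j j) => f f'; case: (M i j) => p q /= *.
rewrite !ler_norml; split; apply/andP; split; nra.
Qed.


Lemma Kset_box eps rho x : Kset eps rho x -> forall l, -1 <= x 0 l <= 1.
Proof.
move=> [T _] l; rewrite -(splitK l).
case: (split l) => p /=; case/mxvec_indexP: p => i j;
  have [h1 h2] := test_bound T i j; move: h1 h2; rewrite !mxE /=;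
  rewrite !ler_norml => /andP[? ?] /andP[? ?]; apply/andP; split => //.
Qed.

Lemma Kset_compact eps rho : compact (Kset eps rho).
Proof.
have Hbox := @rV_compact R (n * n + n * n) (fun=> `[-1, 1]%classic)
  (fun=> @segment_compact _ _ _).
have Hsub : Kset eps rho `<=` [set v : X | forall i, `[-1, 1]%classic (v ord0 i)].
  move=> x Kx i /=; rewrite in_itv /=; exact: Kset_box Kx i.
exact (subclosed_compact (Kset_closed eps rho) Hbox Hsub).
Qed.

Lemma phi0 : phi 0 = 0.
Proof. by apply/matrixP => i j; rewrite !mxE. Qed.

Lemma phi_comb (a b : R) x z : phi (a *: x + b *: z) = a%:C *: phi x + b%:C *: phi z.
Proof. by rewrite phi_lin -[b *: z]addr0 phi_lin phi0 addr0. Qed.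

Lemma clin0 {F} : clin F -> F 0 = 0.
Proof.
move=> HF; have := HF 1 0 0; rewrite scaler0 addr0 one_C mul1r => H.
have : F 0 + F 0 - F 0 = F 0 - F 0 by rewrite -H.
by rewrite addrK subrr.
Qed.

Lemma clin2 {F} : clin F -> forall (a b : R) P Q,
  F (a%:C *: P + b%:C *: Q) = a%:C * F P + b%:C * F Q.
Proof. by move=> HF a b P Q; rewrite HF -[b%:C *: Q]addr0 HF clin0 // addr0. Qed.

Lemma psd_comb (P Q : 'M[C]_n) (a b : R) : psd P -> psd Q -> 0 <= a -> 0 <= b ->
  psd (a%:C *: P + b%:C *: Q).
Proof.
move=> [hP qP] [hQ qQ] a0 b0; split.
  apply/herm_iff => i j.
  rewrite (clin2 (Fent_clin i j)).
  by rewrite (iffLR (herm_iff _) hP) (iffLR (herm_iff _) hQ) !mulr0 addr0.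
move=> v.
have := clin2 (Fq_clin v) a b P Q; rewrite /Fq => ->.
by apply: addr_ge0; apply: mulr_ge0; rewrite ?ler0c //; first [exact: qP|exact: qQ].
Qed.

Lemma ReL2 (a b : R) (z w : C) :
  complex.Re (a%:C * z + b%:C * w) = a * complex.Re z + b * complex.Re w.
Proof. by case: z => x y; case: w => u v /=; rewrite !mul0r !subr0. Qed.

Lemma Kset_convex eps rho : @convexK R X (Kset eps rho).
Proof.
move=> x z a [[[hx qx] [hx' qx']] tx] [[[hz qz] [hz' qz']] tz] /andP[a0 a1].
have a1' : 0 <= 1 - a by lra.
rewrite /Kset /= phi_comb; split; first split.
- rewrite /loewner subr0; apply: psd_comb => //.
    by move: (conj hx qx); rewrite subr0.
  by move: (conj hz qz); rewrite subr0.
- rewrite /loewner.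
  have -> : 1%:M - (a%:C *: phi x + (1 - a)%:C *: phi z) =
      a%:C *: (1%:M - phi x) + (1 - a)%:C *: (1%:M - phi z).
    by apply/matrixP => i j; rewrite !mxE oneB_C; ring.
  exact: psd_comb.
- move: tx tz; rewrite /trR -/(Ftr rho (phi x)) -/(Ftr rho (phi z)).
  rewrite -/(Ftr rho _) (clin2 (Ftr_clin rho)) ReL2 => tx tz.
  have := mulr_ge0 a0 (ltac:(lra) : 0 <= complex.Re (Ftr rho (phi x)) - (1 - eps)).
  have := mulr_ge0 a1' (ltac:(lra) : 0 <= complex.Re (Ftr rho (phi z)) - (1 - eps)).
  nra.
Qed.

Lemma psd0 : psd (0 : 'M[C]_n).
Proof.
split.
  by apply/herm_iff => i j; rewrite /Fent !mxE /= oppr0 subrr.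
by move=> v; rewrite mulmx0 mul0mx mxE.
Qed.

Lemma conj_mul_ge0 (z : C) : 0 <= conjc z * z.
Proof.
case: z => p q; rewrite lecE /=; apply/andP; split.
  by apply/eqP; ring.
by rewrite mulNr opprK; apply: addr_ge0; rewrite -expr2 sqr_ge0.
Qed.

Lemma psd1 : psd (1%:M : 'M[C]_n).
Proof.
split.
  apply/herm_iff => i j; rewrite /Fent !mxE eq_sym.
  by case: (j == i); rewrite /= ?oppr0; apply/eqP; rewrite ?eq_complex /= ?oppr0 ?addr0 ?subrr ?eqxx.
move=> v; rewrite mulmx1 mxE; apply: sumr_ge0 => k _.
by rewrite !mxE conj_mul_ge0.
Qed.

Lemma Kset1 eps rho : 0 < eps -> \tr rho = 1 -> Kset eps rho (psi 1%:M).
Proof.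
move=> e0 tr1; rewrite /Kset /= phiK; split.
  by rewrite /test_op /loewner subr0 subrr; split; [exact: psd1|exact: psd0].
by rewrite /trR mul1mx tr1 /=; lra.
Qed.


End Concrete.
Arguments phi {R n}.
Arguments psi {R n}.
Arguments phiK {R n}.
Arguments phi_lin {R n}.
Arguments ReL {R}.
Arguments ReL2 {R}.
Arguments Ftr {R n}.
Arguments Ftr_clin {R n}.
Arguments rlinX {R m}.
Arguments rlinX_cont {R m}.
Arguments rlinX_aff {R m}.
Arguments Kset {R n}.
Arguments Kset_compact {R n}.
Arguments Kset_convex {R n}.
Arguments Kset1 {R n}.

Section Main.
Variables (R : realType) (dA dB : nat).
Local Notation C := (R[i]).
Local Open Scope complex_scope.
Local Notation N := (dA * dB)%N.
Local Notation X := ('rV[R]_(N * N + N * N)).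

Lemma tens_lin (a b : R) (t t' : 'M[C]_dA) (s : 'M[C]_dB) :
  (a%:C *: t + b%:C *: t') *t s = a%:C *: (t *t s) + b%:C *: (t' *t s).
Proof. by apply/matrixP => i j; rewrite !mxE; ring. Qed.

Definition gdef (s : 'M[C]_dB) (t : 'M[C]_dA) (x : X) : R :=
  trR (phi x *m (t *t s)).

Lemma gdef_rlin s t : rlinX (gdef s t).
Proof.
move=> a x y; rewrite /gdef /trR phi_lin.
by rewrite -/(Ftr (t *t s) _) Ftr_clin ReL.
Qed.

Lemma gdef_mix s (t t' : 'M[C]_dA) (a : R) (x : X) :
  gdef s (a%:C *: t + (1 - a)%:C *: t') x = a * gdef s t x + (1 - a) * gdef s t' x.
Proof.
rewrite /gdef /trR tens_lin mulmxDr -!scalemxAr mxtraceD !mxtraceZ.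
exact: ReL2.
Qed.

End Main.
Arguments gdef {R dA dB}.
Arguments gdef_rlin {R dA dB}.
Arguments gdef_mix {R dA dB}.

Lemma key_lemma (R : realType) (dA dB : nat)
  (rho : 'M[R[i]]_(dA * dB)) (sigma : 'M[R[i]]_dB) (eps : R)
  (SA : set 'M[R[i]]_dA) (t : R) :
  is_state rho -> 0 < eps -> convex_mxset SA -> 0 <= t ->
  (forall tau, SA tau -> forall c, t < c ->
     (neglog2 c < DH eps rho (tau *t sigma))%E) ->
  exists Mstar : 'M[R[i]]_(dA * dB),
    test_op Mstar /\ 1 - eps <= trR (Mstar *m rho) /\
    forall tau, SA tau -> trR (Mstar *m (tau *t sigma)) <= t.
Proof.
move=> hrho e0 cvx t0 H.
pose mix (a : R) (t1 t2 : 'M[R[i]]_dA) := ((a%:C)%C *: t1 + ((1 - a)%:C)%C *: t2).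
have [|x Kx Hx] := @minimax R _ _ SA mix (gdef sigma) (fun t1 t2 a Y1 Y2 a01 => cvx t1 t2 Y1 Y2 a a01)
    (fun t1 t2 a x => gdef_mix sigma t1 t2 a x)
    (fun y => @rlinX_cont _ _ _ (gdef_rlin sigma y))
    (fun y => @rlinX_aff _ _ _ (gdef_rlin sigma y)) t (Kset eps rho)
    (Kset_compact eps rho) (Kset_convex eps rho)
    (ex_intro _ _ (Kset1 eps rho e0 hrho.2)).
  move=> tau Stau c tc.
  have c0 : 0 < c by lra.
  have [y [M [tM trM] <-] lt] := ereal_sup_gt (H tau Stau c tc).
  exists (psi M); first by rewrite /Kset /= phiK.
  rewrite /gdef phiK.
  set u := trR (M *m (tau *t sigma)) in lt *.
  case: (leP u 0) => u0; first lra.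
  move: lt; rewrite /neglog2 leNgt c0 leNgt u0 /= lte_fin ltrN2.
  have l2 : 0 < ln (2 : R) by apply: ln_gt0; lra.
  rewrite ltr_pM2r ?invr_gt0 // ltr_ln ?posrE // => /ltW //.
exists (phi x); split; first by case: Kx.
split; first by case: Kx.
exact: Hx.
Qed.

Theorem lemma5 (R : realType) (dA dB : nat)
  (rho : 'M[R[i]]_(dA * dB)) (sigma : 'M[R[i]]_dB) (eps : R)
  (SA : set 'M[R[i]]_dA) :
  is_state rho -> is_state sigma -> 0 < eps < 1 ->
  (forall tau, SA tau -> is_state tau) -> convex_mxset SA ->
  exists Mstar : 'M[R[i]]_(dA * dB),
    test_op Mstar /\ 1 - eps <= trR (Mstar *m rho) /\
    forall tau, SA tau ->
      ((trR (Mstar *m (tau *t sigma)))%:E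
         <= exp2E (- ItildeH eps SA rho sigma))%E.
Proof.
move=> hrho hsig /andP[e0 e1] hSA cvx.
have Ilb : forall tau, SA tau ->
    (ItildeH eps SA rho sigma <= DH eps rho (tau *t sigma))%E.
  by move=> tau Stau; apply: ereal_inf_lbound; exists tau.
case EI: (ItildeH eps SA rho sigma) => [r| |].
- have t0 : 0 <= 2 `^ (- r) :> R by apply: ltW; apply: powR_gt0; lra.
  have [|M [tM [trM HM]]] := @key_lemma R dA dB rho sigma eps SA (2 `^ (- r)) hrho e0 cvx t0.
    move=> tau Stau c tc.
    have p0 : 0 < 2 `^ (- r) :> R by apply: powR_gt0; lra.
    have c0 : 0 < c by lra.
    apply: (lt_le_trans _ (Ilb tau Stau)); rewrite EI.
    rewrite /neglog2 leNgt c0 /= lte_fin.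
    have l2 : 0 < ln (2 : R) by apply: ln_gt0; lra.
    have : ln (2 `^ (- r)) < ln c by rewrite ltr_ln ?posrE.
    rewrite ln_powR => hl.
    have : - r < ln c / ln 2 by rewrite ltr_pdivlMr.
    lra.
  by exists M; split => //; split => // tau Stau; exact: HM.
- have [|M [tM [trM HM]]] := @key_lemma R dA dB rho sigma eps SA 0 hrho e0 cvx (lexx 0).
    move=> tau Stau c tc.
    have := Ilb tau Stau; rewrite EI leye_eq => /eqP ->.
    by rewrite /neglog2 leNgt tc /= ltry.
  by exists M; split => //; split => // tau Stau; exact: HM.
- exists 1%:M; have := Kset1 eps rho e0 hrho.2; rewrite /Kset /= phiK => -[tM trM].
  by split => //; split => // tau Stau /=; rewrite leey.
Qed.
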